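(* Let $H:\mathbb{R}^n\to\mathbb{R}$ be $\mu_H$-strongly convex with $\mu_H>0$, let $f^i_{j_i}:\mathbb{R}^n\to\mathbb{R}$ ($i\in[S]$, $j_i\in[I_i]$) be convex, and let $X\subset\mathbb{R}^n$ be nonempty, compact and convex. Let $m:=\sum_{i=1}^S I_i$, $F:=\sum_{i=1}^S\sum_{j_i=1}^{I_i} f^i_{j_i}$, and let $x^*_H$ be the unique solution of the bilevel problem: minimize $H(x)$ subject to $x\in\operatorname{argmin}_{y\in X}F(y)$. Let $\epsilon\in(0,0.5)$, and define $\gamma_k=\frac{\gamma_1}{k^a}$ and $\lambda_k=\frac{\lambda_1}{k^b}$ for $k\ge1$, where $\gamma_1,\lambda_1>0$ with $\gamma_1\lambda_1\mu_H\le 2m$, $a=0.5+0.5\epsilon$ and $b=0.5-\epsilon$. Let $\{x_k\}_{k=1}^\infty$ be a sequence generated by FISM (described in the context) with these stepsizes, and set $\hat x_K:=\frac{\sum_{k=1}^K\gamma_kx_k}{\sum_{k=1}^K\gamma_k}$. Then for $K\ge1$, $$F(\hat x_K)-F(x^*_H)\le\mathcal{O}\Big(\frac{1}{K^{0.5-\epsilon}}\Big).$$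
   Context: Notation: $[s]:=\{1,\dots,s\}$; $P_X$ is the Euclidean metric projection onto $X$; $\partial$ denotes the convex subdifferential; $\mathcal{O}(\cdot)$ hides a constant independent of $K$. FISM (Federated Incremental Subgradient Method): given a starting point $x_1\in\mathbb{R}^n$ and positive stepsizes $\{\gamma_k\},\{\lambda_k\}$, for $k=1,2,\dots$: pick $\mathcal{H}_k\in\partial H(x_k)$; for every client $i\in[S]$ set $x^i_{k,1}=x_k$ and for $j_i=1,\dots,I_i$ pick $g^i_{k,j_i}\in\partial f^i_{j_i}(x^i_{k,j_i})$ and set $x^i_{k,j_i+1}=P_X\big[x^i_{k,j_i}-\gamma_k g^i_{k,j_i}-\frac{\gamma_k\lambda_k}{m}\mathcal{H}_k\big]$; then set $x^i_k=x^i_{k,I_i+1}$ and $x_{k+1}=\frac1S\sum_{i=1}^S x^i_k$. *)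

(* Defs.v *)
From HB Require Import structures.
From mathcomp Require Import all_boot all_order all_algebra.
From mathcomp Require Import all_classical all_reals all_analysis.
Set Implicit Arguments. Unset Strict Implicit. Unset Printing Implicit Defensive.
Import Order.TTheory GRing.Theory Num.Theory.
Import numFieldTopology.Exports numFieldNormedType.Exports.
Local Open Scope classical_set_scope.
Local Open Scope ring_scope.

Section Defs.
Variables (R : realType) (n : nat).
Notation vec := 'rV[R]_n.

Definition dotp (u v : vec) : R := \sum_(j < n) u ord0 j * v ord0 j.
Definition sqnorm (u : vec) : R := dotp u u.

Definition convex_set_E (X : set vec) : Prop :=
  forall x y (t : R), X x -> X y -> 0 <= t <= 1 -> X (t *: x + (1 - t) *: y).

Definition convex_fun (h : vec -> R) : Prop :=
  forall x y (t : R), 0 <= t <= 1 ->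
    h (t *: x + (1 - t) *: y) <= t * h x + (1 - t) * h y.

Definition strongly_convex (mu : R) (h : vec -> R) : Prop :=
  forall x y (t : R), 0 <= t <= 1 ->
    h (t *: x + (1 - t) *: y) <=
      t * h x + (1 - t) * h y - mu / 2 * t * (1 - t) * sqnorm (x - y).

Definition is_subgrad (h : vec -> R) (x g : vec) : Prop :=
  forall y, h x + dotp g (y - x) <= h y.

Definition is_proj (X : set vec) (z p : vec) : Prop :=
  X p /\ forall y, X y -> sqnorm (z - p) <= sqnorm (z - y).

Definition is_argmin (h : vec -> R) (A : set vec) (x : vec) : Prop :=
  A x /\ forall y, A y -> h x <= h y.

End Defs.

(* Main.v *)
Require Import Defs.
From HB Require Import structures.
From mathcomp Require Import all_boot all_order all_algebra.
From mathcomp Require Import all_classical all_reals all_analysis.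
From mathcomp Require Import ring lra.
Import Order.TTheory GRing.Theory Num.Theory.
Import numFieldTopology.Exports numFieldNormedType.Exports.
Local Open Scope classical_set_scope.
Local Open Scope ring_scope.
Set Implicit Arguments. Unset Strict Implicit. Unset Printing Implicit Defensive.


Section Aux.
Variables (R : realType) (n : nat).
Local Notation vec := 'rV[R]_n.
Implicit Types u v w : vec.

Lemma dotpC u v : dotp u v = dotp v u.
Proof. by rewrite /dotp; apply: eq_bigr => j _; rewrite mulrC. Qed.
Lemma dotpDl u v w : dotp (u + v) w = dotp u w + dotp v w.
Proof. by rewrite /dotp -big_split; apply: eq_bigr => j _; rewrite mxE mulrDl. Qed.
Lemma dotpZl (a : R) u v : dotp (a *: u) v = a * dotp u v.
Proof. by rewrite /dotp mulr_sumr; apply: eq_bigr => j _; rewrite mxE mulrA. Qed.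
Lemma dotpNl u v : dotp (- u) v = - dotp u v.
Proof. by rewrite /dotp -sumrN; apply: eq_bigr => j _; rewrite mxE mulNr. Qed.
Lemma dotpBl u v w : dotp (u - v) w = dotp u w - dotp v w.
Proof. by rewrite dotpDl dotpNl. Qed.
Lemma dotpDr u v w : dotp w (u + v) = dotp w u + dotp w v.
Proof. by rewrite dotpC dotpDl !(dotpC w). Qed.
Lemma dotpZr (a : R) u v : dotp v (a *: u) = a * dotp v u.
Proof. by rewrite dotpC dotpZl dotpC. Qed.
Lemma dotpBr u v w : dotp w (u - v) = dotp w u - dotp w v.
Proof. by rewrite dotpC dotpBl !(dotpC w). Qed.

Lemma sqnorm_ge0 u : 0 <= sqnorm u.
Proof. by rewrite /sqnorm /dotp sumr_ge0 // => j _; rewrite -expr2 sqr_ge0. Qed.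
Lemma sqnormB u v : sqnorm (u - v) = sqnorm u - 2 * dotp u v + sqnorm v.
Proof. rewrite /sqnorm !dotpBl !dotpBr (dotpC v u); ring. Qed.
Lemma sqnormD u v : sqnorm (u + v) = sqnorm u + 2 * dotp u v + sqnorm v.
Proof. rewrite /sqnorm !dotpDl !dotpDr (dotpC v u); ring. Qed.
Lemma sqnormZ (a : R) u : sqnorm (a *: u) = a ^+ 2 * sqnorm u.
Proof. rewrite /sqnorm dotpZl dotpZr; ring. Qed.
Lemma sqnormN u : sqnorm (- u) = sqnorm u.
Proof. rewrite /sqnorm dotpNl dotpC dotpNl; ring. Qed.
Lemma sqnormC u v : sqnorm (u - v) = sqnorm (v - u).
Proof. by rewrite -sqnormN opprB. Qed.
Lemma dotp_le u v : 2 * dotp u v <= sqnorm u + sqnorm v.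
Proof. have := sqnorm_ge0 (u - v); rewrite sqnormB; lra. Qed.
Lemma dotp_geN u v : - (2 * dotp u v) <= sqnorm u + sqnorm v.
Proof. have := sqnorm_ge0 (u + v); rewrite sqnormD; lra. Qed.
Lemma sqnormB_le u v : sqnorm (u - v) <= 2 * sqnorm u + 2 * sqnorm v.
Proof. have := dotp_geN u v; rewrite sqnormB; lra. Qed.
Lemma sqnormD_le u v : sqnorm (u + v) <= 2 * sqnorm u + 2 * sqnorm v.
Proof. have := dotp_le u v; rewrite sqnormD; lra. Qed.

Lemma coord_le_sqnorm u j : (u ord0 j) ^+ 2 <= sqnorm u.
Proof.
rewrite /sqnorm /dotp (bigD1 j) //= expr2 lerDl sumr_ge0 // => l _.
by rewrite -expr2 sqr_ge0.
Qed.

Lemma sqnorm_le_coord u (c : R) : (forall j, `|u ord0 j| <= c) ->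
  sqnorm u <= n%:R * c ^+ 2.
Proof.
move=> H; rewrite /sqnorm /dotp.
apply: le_trans (_ : \sum_(j < n) c ^+ 2 <= _).
  apply: ler_sum => j _; have := H j; have := normr_ge0 (u ord0 j).
  rewrite -[u ord0 j * _]expr2 -real_normK ?num_real //; nra.
by rewrite sumr_const card_ord mulr_natl.
Qed.

End Aux.



Section Aux2.
Variables (R : realType) (n : nat).
Local Notation vec := 'rV[R]_n.
Implicit Types u v w : vec.

Lemma proj_var (X : set vec) w p y : convex_set_E X -> is_proj X w p -> X y ->
  dotp (w - p) (y - p) <= 0.
Proof.
move=> cX [Xp Hp] Xy.
set a := dotp (w - p) (y - p); set s := sqnorm (y - p).
have s0 : 0 <= s by apply: sqnorm_ge0.
rewrite leNgt; apply/negP => a0.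
pose t := a / (s + a).
have sa0 : 0 < s + a by lra.
have t0 : 0 <= t by rewrite divr_ge0 // ltW.
have t1 : t <= 1 by rewrite ler_pdivrMr // mul1r; lra.
have t01 : 0 <= t <= 1 by rewrite t0 t1.
have := Hp _ (cX _ _ t Xy Xp t01).
have -> : w - (t *: y + (1 - t) *: p) = (w - p) - t *: (y - p).
  by apply/rowP => j; rewrite !mxE; ring.
rewrite (sqnormB (w - p)) sqnormZ dotpZr -/a -/s => H.
have H2 : 2 * a <= t * s.
  have tp : 0 < t by rewrite divr_gt0.
  rewrite -(ler_pM2l tp); lra.
have : t * s < a.
  rewrite /t mulrAC ltr_pdivrMr // ; nra.
lra.
Qed.

Lemma proj_nonexp (X : set vec) w p y : convex_set_E X -> is_proj X w p -> X y ->
  sqnorm (p - y) <= sqnorm (w - y).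
Proof.
move=> cX Hp Xy; have := proj_var cX Hp Xy.
have -> : w - y = (w - p) - (y - p) by apply/rowP => j; rewrite !mxE; ring.
rewrite (sqnormC p y) (sqnormB (w - p)); have := sqnorm_ge0 (w - p); lra.
Qed.

End Aux2.



Section Jensen.
Variables (R : realType) (n : nat).
Local Notation vec := 'rV[R]_n.

Lemma sum_pos (I : eqType) (r : seq I) (w : I -> R) : r != [::] ->
  (forall i, i \in r -> 0 < w i) -> 0 < \sum_(i <- r) w i.
Proof.
elim: r => [//|i r IH] _ H; rewrite big_cons.
have wi : 0 < w i by apply: H; rewrite mem_head.
case: r IH H => [|i' r'] IH H; first by rewrite big_nil addr0.
have : 0 < \sum_(j <- i' :: r') w j.
  by apply: IH => // j jr; apply: H; rewrite in_cons jr orbT.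
lra.
Qed.

Lemma comb_id (a S' : R) (P V : vec) : 0 < a -> 0 < S' ->
  (a + S')^-1 *: (a *: P + V) =
  (a / (a + S')) *: P + (1 - a / (a + S')) *: (S'^-1 *: V).
Proof.
move=> a0 S0; apply/rowP => j; rewrite !mxE.
have h1 : a + S' != 0 by apply/lt0r_neq0; lra.
have h2 : S' != 0 by apply/lt0r_neq0.
by field; rewrite h1 h2.
Qed.

Lemma jensen_set (X : set vec) (I : eqType) (r : seq I) (w : I -> R) (p : I -> vec) :
  convex_set_E X -> r != [::] -> (forall i, i \in r -> 0 < w i /\ X (p i)) ->
  X ((\sum_(i <- r) w i)^-1 *: \sum_(i <- r) w i *: p i).
Proof.
move=> cX; elim: r => [//|i r IH] _ H; rewrite !big_cons.
have [wi Xi] : 0 < w i /\ X (p i) by apply: H; rewrite mem_head.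
case: r IH H => [|i' r'] IH H.
  rewrite !big_nil addr0 addr0 scalerA mulVf ?scale1r //; exact: lt0r_neq0.
set r := i' :: r'.
have Hr : forall j, j \in r -> 0 < w j /\ X (p j).
  by move=> j jr; apply: H; rewrite in_cons jr orbT.
have S0 : 0 < \sum_(j <- r) w j by apply: sum_pos => // j /Hr [].
rewrite comb_id //; apply: cX => //; first exact: IH.
apply/andP; split; first by rewrite divr_ge0 // ltW // addr_gt0.
by rewrite ler_pdivrMr ?addr_gt0 // mul1r lerDl ltW.
Qed.

Lemma jensen_fun (phi : vec -> R) (I : eqType) (r : seq I) (w : I -> R) (p : I -> vec) :
  convex_fun phi -> r != [::] -> (forall i, i \in r -> 0 < w i) ->
  (\sum_(i <- r) w i) * phi ((\sum_(i <- r) w i)^-1 *: \sum_(i <- r) w i *: p i)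
  <= \sum_(i <- r) w i * phi (p i).
Proof.
move=> cphi; elim: r => [//|i r IH] _ H; rewrite !big_cons.
have wi : 0 < w i by apply: H; rewrite mem_head.
case: r IH H => [|i' r'] IH H.
  rewrite !big_nil !addr0 scalerA mulVf ?scale1r //; exact: lt0r_neq0.
set r := i' :: r'.
have Hr : forall j, j \in r -> 0 < w j by move=> j jr; apply: H; rewrite in_cons jr orbT.
have S0 : 0 < \sum_(j <- r) w j by apply: sum_pos.
have IH' := IH isT Hr.
rewrite comb_id //.
set S' := \sum_(j <- r) w j in S0 IH' *.
set t := w i / (w i + S').
have t01 : 0 <= t <= 1.
  apply/andP; split; first by rewrite divr_ge0 // ltW // addr_gt0.
  by rewrite ler_pdivrMr ?addr_gt0 // mul1r lerDl ltW.
have := cphi (p i) (S'^-1 *: \sum_(j <- r) w j *: p j) t t01.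
set A := phi (_ + _); set B := phi (S'^-1 *: _) => HA.
have e1 : (w i + S') * t = w i by rewrite /t; field; apply/lt0r_neq0; lra.
have e2 : (w i + S') * (1 - t) = S' by rewrite /t; field; apply/lt0r_neq0; lra.
have HA' : (w i + S') * A <= w i * phi (p i) + S' * B.
  have := HA; rewrite -(@ler_pM2l _ (w i + S')); last by lra.
  by rewrite mulrDr (mulrA _ t) (mulrA _ (1 - t)) e1 e2.
have IH2 : S' * B <= \sum_(j <- r) w j * phi (p j) := IH'.
lra.
Qed.

End Jensen.



Lemma le_sum_term (R : realType) (T : finType) (F : T -> R) i0 :
  (forall i, 0 <= F i) -> F i0 <= \sum_i F i.
Proof. by move=> H; rewrite (bigD1 i0) //= lerDl sumr_ge0. Qed.

Section Cube.
Variables (R : realType) (n : nat).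
Local Notation vec := 'rV[R]_n.

Definition cube (M : R) (y : vec) := forall j, `|y ord0 j| <= M.

Lemma cube_upper (phi : vec -> R) (M : R) : convex_fun phi -> 0 <= M ->
  exists B, forall y, cube M y -> phi y <= B.
Proof.
move=> cphi M0.
pose vertex (s : {ffun 'I_n -> bool}) : vec := \row_j (if s j then M else - M).
exists (\sum_s `|phi (vertex s)|).
have claim : forall k, (k <= n)%N -> forall y, cube M y -> exists y', [/\ cube M y',
    (forall j : 'I_n, (j < k)%N -> y' ord0 j = M \/ y' ord0 j = - M) & phi y <= phi y'].
  elim=> [|k IH] kn y cy.
    by exists y; split.
  have [y' [cy' Hy' py']] := IH (ltnW kn) y cy.
  pose j0 : 'I_n := Ordinal kn.
  have [M00|Mp] := eqVneq M 0.
    exists y'; split => // j; rewrite ltnS leq_eqVlt => /orP [/eqP jk|jk]; last exact: Hy'.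
    left; have := cy' j; rewrite M00 normr_le0 => /eqP ->.
    done.
  have Mpos : 0 < M by rewrite lt_neqAle eq_sym Mp M0.
  pose yp : vec := \row_j (if j == j0 then M else y' ord0 j).
  pose ym : vec := \row_j (if j == j0 then - M else y' ord0 j).
  pose t := (y' ord0 j0 + M) / (2 * M).
  have hj0 := cy' j0; move: hj0; rewrite ler_norml => /andP [h1 h2].
  have t01 : 0 <= t <= 1.
    apply/andP; split; first by rewrite divr_ge0 //; lra.
    by rewrite ler_pdivrMr ?mulr_gt0 //; lra.
  have ey : y' = t *: yp + (1 - t) *: ym.
    apply/rowP => j; rewrite !mxE; case: eqVneq => [->|_]; last by ring.
    rewrite /t; field; exact: Mp.
  have hc := cphi yp ym t t01; rewrite -ey in hc.
  have cyp : cube M yp by move=> j; rewrite mxE; case: eqVneq => _ //; rewrite ger0_norm.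
  have cym : cube M ym by move=> j; rewrite mxE; case: eqVneq => _ //; rewrite normrN ger0_norm.
  have Hcoord : forall (z : vec) (c : R), (c = M \/ c = - M) ->
      z = \row_j (if j == j0 then c else y' ord0 j) ->
      forall j : 'I_n, (j < k.+1)%N -> z ord0 j = M \/ z ord0 j = - M.
    move=> z c hc' -> j; rewrite mxE ltnS leq_eqVlt => /orP [/eqP jk|jk].
      have -> : j = j0 by apply/val_inj.
      by rewrite eqxx.
    have -> : (j == j0) = false by apply/negbTE; apply/eqP => ejj; rewrite ejj /= ltnn in jk.
    exact: Hy'.
  have [le|lt] := lerP (phi yp) (phi ym).
    exists ym; split => //; first exact: (Hcoord ym (- M) (or_intror erefl) erefl).
    move/andP: t01 => [t0 t1].
    have : t * phi yp <= t * phi ym by rewrite ler_wpM2l.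
    lra.
  exists yp; split => //; first exact: (Hcoord yp M (or_introl erefl) erefl).
  move/andP: t01 => [t0 t1].
  have : (1 - t) * phi ym <= (1 - t) * phi yp by rewrite ler_wpM2l ?subr_ge0 // ltW.
  lra.
move=> y cy; have [y' [cy' Hy' py']] := claim n (leqnn n) y cy.
pose s := [ffun j => y' ord0 j == M].
apply: le_trans py' _.
have -> : y' = vertex s.
  apply/rowP => j; rewrite !mxE ffunE; case: eqVneq => [->//|ne].
  by case: (Hy' j (ltn_ord j)) => // /eqP; rewrite (negbTE ne).
apply: le_trans (ler_norm _) _.
by rewrite (bigD1 s) //= lerDl sumr_ge0.
Qed.

Lemma cube_abs (phi : vec -> R) (M : R) : convex_fun phi -> 0 <= M ->
  exists B, 0 <= B /\ forall y, cube M y -> `|phi y| <= B.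
Proof.
move=> cphi M0; have [B HB] := cube_upper cphi M0.
exists (`|B| + 2 * `|phi 0|); split; first by rewrite addr_ge0 // mulr_ge0.
move=> y cy; rewrite ler_norml; apply/andP; split; last first.
  have := HB _ cy; have := ler_norm B; have := normr_ge0 (phi 0); lra.
have cy' : cube M (- y) by move=> j; rewrite mxE normrN.
have := HB _ cy'.
have t01 : 0 <= (2^-1 : R) <= 1.
  by apply/andP; split; [rewrite invr_ge0 | rewrite invf_le1 // ler1n].
have h := cphi y (- y) (2^-1) t01.
have e : (2^-1) *: y + (1 - 2^-1) *: - y = 0 :> vec by apply/rowP => j; rewrite !mxE; field.
rewrite e in h.
have := ler_norm B; have := ler_norm (- phi 0); rewrite normrN; lra.
Qed.
End Cube.



Section Sub.
Variables (R : realType) (n : nat).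
Local Notation vec := 'rV[R]_n.

Lemma dotp_delta (g : vec) j (s : R) :
  dotp g (\row_l (if l == j then s else 0)) = g ord0 j * s.
Proof.
rewrite /dotp (bigD1 j) //= mxE eqxx big1 ?addr0 // => l /negbTE ne.
by rewrite mxE ne mulr0.
Qed.

Lemma subgrad_bound (phi : vec -> R) (z g : vec) (M B : R) :
  (forall y, cube (M + 1) y -> `|phi y| <= B) -> cube M z ->
  is_subgrad phi z g -> forall j, `|g ord0 j| <= 2 * B.
Proof.
move=> HB cz Hg j.
have key : forall s : R, `|s| <= 1 -> g ord0 j * s <= 2 * B.
  move=> s s1.
  pose e : vec := \row_l (if l == j then s else 0).
  have cy : cube (M + 1) (z + e).
    move=> l; rewrite !mxE; apply: le_trans (ler_normD _ _) _.
    apply: lerD; first exact: cz.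
    by case: eqVneq => _ //; rewrite normr0.
  have := Hg (z + e); have -> : z + e - z = e by rewrite addrC addKr.
  rewrite dotp_delta.
  have czz : cube (M + 1) z by move=> l; apply: le_trans (cz l) _; rewrite lerDl.
  have := HB _ cy; have := HB _ czz; rewrite !ler_norml.
  move=> /andP [h1 h2] /andP [h3 h4]; lra.
have k1 : g ord0 j * 1 <= 2 * B by apply: key; rewrite normr1.
have k2 : g ord0 j * -1 <= 2 * B by apply: key; rewrite normrN1.
rewrite ler_norml; apply/andP; split; lra.
Qed.

Lemma rowP0 (u : vec) : sqnorm u = 0 -> u = 0.
Proof.
move=> h; apply/rowP => j; rewrite mxE.
have := coord_le_sqnorm u j; rewrite h => h2.
have := sqr_ge0 (u ord0 j).
move=> h3; apply/eqP; rewrite -sqrf_eq0; apply/eqP; lra.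
Qed.

Lemma lip (phi : vec -> R) (M B g : R) (u v : vec) :
  convex_fun phi -> (forall y, cube (M + 1) y -> `|phi y| <= B) ->
  cube M u -> cube M v -> 0 <= g ->
  2 * g * (phi v - phi u) <= g ^+ 2 * (2 * B) ^+ 2 + sqnorm (v - u).
Proof.
move=> cphi HB cu cv g0.
have B0 : 0 <= B by apply: le_trans (HB v _); [exact: normr_ge0|move=> l; apply: le_trans (cv l) _; rewrite lerDl].
have [s0|sp] := eqVneq (sqnorm (v - u)) 0.
  have := rowP0 s0; move/eqP; rewrite subr_eq0 => /eqP ->.
  rewrite subrr mulr0; apply: addr_ge0; last exact: sqnorm_ge0.
  by apply: mulr_ge0; apply: exprn_ge0 => //; rewrite mulr_ge0.
have s0 : 0 < sqnorm (v - u) by rewrite lt_neqAle eq_sym sp sqnorm_ge0.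
set r := Num.sqrt (sqnorm (v - u)).
have r0 : 0 < r by rewrite sqrtr_gt0.
have r2 : r ^+ 2 = sqnorm (v - u) by rewrite sqr_sqrtr // ltW.
have coord : forall j, `|(v - u) ord0 j| <= r.
  move=> j; have := coord_le_sqnorm (v - u) j; rewrite -r2 => h.
  rewrite ler_norml; apply/andP; split; nra.
pose w := v + r^-1 *: (v - u).
have cw : cube (M + 1) w.
  move=> j; rewrite /w mxE; apply: le_trans (ler_normD _ _) _; apply: lerD; first exact: cv.
  have ri : 0 <= r^-1 by rewrite invr_ge0 ltW.
  rewrite mxE normrM (ger0_norm ri) ler_pdivrMl // mulr1; exact: coord.
pose t := (1 + r)^-1.
have t01 : 0 <= t <= 1.
  by apply/andP; split; [rewrite invr_ge0; lra | rewrite invf_le1; lra].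
have ev : t *: u + (1 - t) *: w = v.
  apply/rowP => j; rewrite /w !mxE /t; field.
  by apply/andP; split; apply/lt0r_neq0; lra.
have := cphi u w t t01; rewrite ev => hc.
have cu1 : cube (M + 1) u by move=> l; apply: le_trans (cu l) _; rewrite lerDl.
have := HB _ cw; have := HB _ cu1; rewrite !ler_norml => /andP [h1 h2] /andP [h3 h4].
have e1 : 1 - t = r * t by rewrite /t; field; apply/lt0r_neq0; lra.
have tp : 0 < t by rewrite invr_gt0; lra.
have t1 : t <= 1 by case/andP: t01.
have h5 : phi v - phi u <= (1 - t) * (phi w - phi u) by lra.
have h6 : (1 - t) * (phi w - phi u) <= r * (2 * B).
  rewrite e1 -mulrA ler_pM2l //.
  have : t * (phi w - phi u) <= t * (2 * B) by apply: ler_wpM2l; [exact: ltW tp| lra].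
  have : t * (2 * B) <= 1 * (2 * B) by apply: ler_wpM2r; [rewrite mulr_ge0|].
  lra.
rewrite -r2.
have : 2 * g * (phi v - phi u) <= 2 * g * (r * (2 * B)) by rewrite ler_wpM2l ?mulr_ge0 //; lra.
have := sqr_ge0 (g * (2 * B) - r); nra.
Qed.
End Sub.



Section Pow.
Variable R : realType.

Lemma young_pow (x q : R) : 0 <= x -> 0 < q -> q < 1 -> x `^ q <= q * x + (1 - q).
Proof.
move=> x0 q0 q1.
have q'0 : 0 < 1 - q by lra.
have i1 : 0 < q^-1 by rewrite invr_gt0.
have i2 : 0 < (1 - q)^-1 by rewrite invr_gt0.
have := @conjugate_powR R (x `^ q) 1 q^-1 (1 - q)^-1 (powR_ge0 _ _) ler01 i1 i2.
have e1 : q^-1^-1 = q by apply: invrK.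
have e2 : (1 - q)^-1^-1 = 1 - q by apply: invrK.
rewrite e1 e2 mulr1 powR1 -powRrM mulfV ?powRr1 //; last exact: lt0r_neq0.
rewrite [q * x]mulrC => h; apply: le_trans (h _) _; first lra.
by rewrite mul1r.
Qed.

Lemma step_pow (k : nat) (q : R) : 0 < q -> q < 1 ->
  q / ((k.+1)%:R `^ (1 - q)) <= (k.+1)%:R `^ q - k%:R `^ q.
Proof.
move=> q0 q1.
set K : R := (k.+1)%:R.
have K0 : 0 < K by rewrite ltr0n.
have eK : K `^ (1 - q) = K / K `^ q.
  rewrite powRB; first by rewrite powRr1 // ltW.
  by apply/implyP => _; exact: lt0r_neq0.
have Kq : 0 < K `^ q by apply: powR_gt0.
pose x := k%:R / K.
have x0 : 0 <= x by rewrite divr_ge0 // ltW.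
have ek : k%:R = x * K by rewrite /x mulfVK //; exact: lt0r_neq0.
rewrite ek (powRM _ x0 (ltW K0)).
have hy := young_pow x0 q0 q1.
rewrite eK.
have e1 : q / (K / K `^ q) = q * (1 - x) * K `^ q.
  rewrite /x /K; field.
  by rewrite -natr1 addrC -/K lt0r_neq0 // lt0r_neq0.
rewrite e1.
have : x `^ q * K `^ q <= (q * x + (1 - q)) * K `^ q by rewrite ler_pM2r.
nra.
Qed.

Lemma sum_pow (K : nat) (q : R) : 0 < q -> q < 1 ->
  \sum_(1 <= k < K.+1) 1 / (k%:R `^ (1 - q)) <= K%:R `^ q / q.
Proof.
move=> q0 q1; elim: K => [|K IH].
  by rewrite big_geq // powR0 ?mul0r // gt_eqF.
rewrite big_nat_recr //=.
have := step_pow K q0 q1.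
have e : K.+1%:R `^ q / q = K%:R `^ q / q + (K.+1%:R `^ q - K%:R `^ q) / q.
  by field; rewrite gt_eqF.
rewrite e => h; apply: lerD => //.
rewrite ler_pdivlMr // mulrC mulrA mulr1; exact: h.
Qed.
End Pow.



Section Misc.
Variables (R : realType) (n : nat).
Local Notation vec := 'rV[R]_n.

Lemma sqnorm_convex : convex_fun (@sqnorm R n).
Proof.
move=> u v t /andP [t0 t1]; rewrite /sqnorm /dotp mulr_sumr mulr_sumr -big_split /=.
apply: ler_sum => j _; rewrite !mxE.
have := sqr_ge0 (u ord0 j - v ord0 j); set a := u ord0 j; set b := v ord0 j.
move=> h; have : 0 <= t * (1 - t) by rewrite mulr_ge0 // subr_ge0.
nra.
Qed.

Lemma fam_bound (T : finType) (P : T -> R -> Prop) :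
  (forall i, exists B, P i B) -> (forall i B B', B <= B' -> P i B -> P i B') ->
  exists B, forall i, P i B.
Proof.
move=> H mono; have [f Hf] := choice H.
exists (\sum_i `|f i|) => i; apply: mono (Hf i).
apply: le_trans (ler_norm _) _.
by rewrite (bigD1 i) //= lerDl sumr_ge0.
Qed.

Lemma compact_cube (X : set vec) : compact X -> exists M, 0 <= M /\ forall z, X z -> cube M z.
Proof.
move=> /compact_bounded [M [Mreal normAltM]].
exists (`|M| + 1); split; first by rewrite addr_ge0.
move=> v Xv i.
have hM : M < `|M| + 1 by apply: le_lt_trans (ler_norm M) _; rewrite ltrDl.
have normvleM := normAltM _ hM v Xv.
apply: le_trans normvleM.
have /mapP[j Hj ->] : `|v ord0 i| \in [seq `|v x.1 x.2| | x : 'I_1 * 'I_n].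
  by apply/mapP; exists (ord0, i) => //=; rewrite mem_enum.
by rewrite [leRHS]/Num.norm /= mx_normrE; apply/bigmax_geP; right => /=; exists j.
Qed.

End Misc.

Lemma sc_convex (R : realType) n (mu : R) (h : 'rV[R]_n -> R) :
  0 < mu -> strongly_convex mu h -> convex_fun h.
Proof.
move=> mu0 sh u v t t01; apply: le_trans (sh u v t t01) _.
rewrite lerBlDr lerDl; case/andP: t01 => t0 t1.
by rewrite !mulr_ge0 ?sqnorm_ge0 ?subr_ge0 // ?invr_ge0 ?ltW.
Qed.

Lemma avg_eq (R : realType) n (S : nat) (p : 'I_S -> 'rV[R]_n) :
  S%:R^-1 *: \sum_(i < S) p i = (\sum_(i < S) (1:R))^-1 *: \sum_(i < S) (1:R) *: p i.
Proof.
rewrite sumr_const card_ord; congr (_ *: _); apply: eq_bigr => i _; by rewrite scale1r.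
Qed.

Lemma enum_ne (S : nat) : (0 < S)%N -> index_enum 'I_S != [::].
Proof. by move=> S0; apply/eqP => e; have := mem_index_enum (Ordinal S0); rewrite e. Qed.


Unset Implicit Arguments. Set Strict Implicit.

Theorem theorem2 (R : realType) (n S : nat) (I : 'I_S -> nat)
  (H : 'rV[R]_n -> R) (muH : R) (f : 'I_S -> nat -> 'rV[R]_n -> R)
  (X : set 'rV[R]_n) (xstar : 'rV[R]_n) (eps gamma1 lambda1 : R)
  (x : nat -> 'rV[R]_n) (Hsub : nat -> 'rV[R]_n)
  (xloc : nat -> 'I_S -> nat -> 'rV[R]_n) (g : nat -> 'I_S -> nat -> 'rV[R]_n) :
  let m : nat := (\sum_(i < S) I i)%N in
  let F : 'rV[R]_n -> R := fun y => \sum_(i < S) \sum_(1 <= j < (I i).+1) f i j y in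
  let a : R := 1 / 2 + eps / 2 in
  let b : R := 1 / 2 - eps in
  let gamma : nat -> R := fun k => gamma1 / (k%:R `^ a) in
  let lambda : nat -> R := fun k => lambda1 / (k%:R `^ b) in
  let xhat : nat -> 'rV[R]_n := fun K =>
    (\sum_(1 <= k < K.+1) gamma k)^-1 *: \sum_(1 <= k < K.+1) gamma k *: x k in
  (0 < S)%N ->
  (forall i, (0 < I i)%N) ->
  0 < muH -> strongly_convex muH H ->
  (forall i j, (1 <= j <= I i)%N -> convex_fun (f i j)) ->
  X !=set0 -> compact X -> convex_set_E X ->
  (* xstar solves: minimize H over argmin_{y in X} F y *)
  is_argmin H (is_argmin F X) xstar ->
  0 < eps < 1 / 2 ->
  0 < gamma1 -> 0 < lambda1 -> gamma1 * lambda1 * muH <= 2 * m%:R ->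
  (* FISM iterations, k >= 1 *)
  (forall k, (1 <= k)%N -> is_subgrad H (x k) (Hsub k)) ->
  (forall k i, (1 <= k)%N -> xloc k i 1%N = x k) ->
  (forall k i j, (1 <= k)%N -> (1 <= j <= I i)%N ->
     is_subgrad (f i j) (xloc k i j) (g k i j) /\
     is_proj X (xloc k i j - gamma k *: g k i j
                 - (gamma k * lambda k / m%:R) *: Hsub k) (xloc k i j.+1)) ->
  (forall k, (1 <= k)%N ->
     x k.+1 = S%:R^-1 *: \sum_(i < S) xloc k i (I i).+1) ->
  exists C : R, forall K : nat, (1 <= K)%N ->
    F (xhat K) - F xstar <= C / (K%:R `^ (1 / 2 - eps)).
Proof.
move=> m F a b gamma lambda xhat S0 I0 muH0 sH cf Xne cX cvX [[Xy _] _]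
  /andP[eps0 eps1] g10 l10 _ HsubP xloc1 Hstep Hx.
set y := xstar in Xy *.
have Iim : forall i, (I i <= m)%N by move=> i; rewrite /m (bigD1 i) //= leq_addr.
have m1 : (1 <= m)%N by apply: leq_trans (I0 (Ordinal S0)) (Iim _).
have m0 : 0 < m%:R :> R by rewrite ltr0n.
have [M0 [M00 XM]] := compact_cube cX.
have M01 : 0 <= M0 + 1 by rewrite addr_ge0.
have [BH [BH0 HBH]] := cube_abs (sc_convex muH0 sH) M01.
have [Bf HBf] : exists B0 : R, forall ij : 'I_S * 'I_m.+1,
   (1 <= ij.2 <= I ij.1)%N -> forall z, cube (M0 + 1) z -> `|f ij.1 ij.2 z| <= B0.
  apply: (@fam_bound R _ (fun ij : 'I_S * 'I_m.+1 => fun B0 =>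
   (1 <= ij.2 <= I ij.1)%N -> forall z, cube (M0 + 1) z -> `|f ij.1 ij.2 z| <= B0)).
- move=> [i j] /=; case: (boolP (1 <= j <= I i)%N) => hij.
    have [B0 [_ HB0]] := cube_abs (cf _ _ hij) M01.
    by exists B0 => _.
  by exists 0.
- move=> ij B1 B2 le12 h1 hc z cz; exact: le_trans (h1 hc z cz) le12.
set B := BH + `|Bf|.
have B0 : 0 <= B by rewrite addr_ge0.
have goodH : forall z, cube (M0 + 1) z -> `|H z| <= B.
  move=> z cz; apply: le_trans (HBH z cz) _; rewrite lerDl //.
have goodf : forall i j, (1 <= j <= I i)%N -> forall z, cube (M0 + 1) z -> `|f i j z| <= B.
  move=> i j hij z cz.
  have jm : (j < m.+1)%N by rewrite ltnS; apply: leq_trans (Iim i); case/andP: hij.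
  have := HBf (i, Ordinal jm) hij z cz => /= h.
  apply: le_trans h _; apply: le_trans (ler_norm _) _; rewrite lerDr //.
have powpos : forall k (r : R), (1 <= k)%N -> 0 < k%:R `^ r.
  by move=> k r k1; rewrite powR_gt0 // ltr0n.
have gpos : forall k, (1 <= k)%N -> 0 < gamma k.
  by move=> k k1; rewrite /gamma divr_gt0 // powpos.
have b0 : 0 <= b by rewrite /b; lra.
have lpos : forall k, (1 <= k)%N -> 0 < lambda k.
  by move=> k k1; rewrite /lambda divr_gt0 // powpos.
have lle : forall k, (1 <= k)%N -> lambda k <= lambda1.
  move=> k k1; have h1 : k%:R `^ 0 <= k%:R `^ b :> R by apply: ler_powR; rewrite ?ler1n.
  rewrite powRr0 in h1.
  rewrite /lambda ler_pdivrMr ?powpos //; rewrite ler_peMr //; exact: ltW.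
have XlocP : forall k i j, (1 <= k)%N -> (1 <= j <= I i)%N -> X (xloc k i j.+1).
  by move=> k i j k1 hj; case: (Hstep k i j k1 hj) => _ [].
have Xx : forall k, (2 <= k)%N -> X (x k).
  case=> [//|k] k2; rewrite (Hx k k2) avg_eq.
  apply: jensen_set => //; first exact: enum_ne.
  move=> i _; split; first exact: ltr01.
  by apply: XlocP => //; rewrite leqnn andbT.
have XlocA : forall k i j, (2 <= k)%N -> (1 <= j <= (I i).+1)%N -> X (xloc k i j).
  move=> k i [//|j] k2 /andP [_ hj].
  case: j hj => [_|j hj]; first by rewrite xloc1 ?(ltnW k2) //; exact: Xx.
  by apply: XlocP => //; exact: (ltnW k2).
set G2 := n%:R * (2 * B) ^+ 2.
have G20 : 0 <= G2 by rewrite mulr_ge0 // exprn_ge0 // mulr_ge0.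
have subH : forall k, (2 <= k)%N -> sqnorm (Hsub k) <= G2.
  move=> k k2; apply: sqnorm_le_coord => j.
  exact: (subgrad_bound goodH (XM _ (Xx k k2)) (HsubP k (ltnW k2))).
have subf : forall k i j, (2 <= k)%N -> (1 <= j <= I i)%N -> sqnorm (g k i j) <= G2.
  move=> k i j k2 hj; apply: sqnorm_le_coord => l.
  have hj' : (1 <= j <= (I i).+1)%N by case/andP: hj => -> /= /leqW.
  exact: (subgrad_bound (goodf i j hj) (XM _ (XlocA k i j k2 hj')) (Hstep k i j (ltnW k2) hj).1).
set E := 2 * G2 * (1 + lambda1 ^+ 2).
have E0 : 0 <= E by rewrite /E !mulr_ge0 // addr_ge0 // exprn_ge0 // ltW.
have mR1 : 1 <= m%:R :> R by rewrite ler1n.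
have cbound : forall k, (2 <= k)%N -> 0 <= gamma k * lambda k / m%:R <= gamma k * lambda1
    /\ gamma k * lambda k / m%:R <= gamma k * lambda k.
  move=> k k2; have k1 := ltnW k2; set c := gamma k * lambda k / m%:R.
  have gl0 : 0 < gamma k * lambda k by rewrite mulr_gt0 ?gpos ?lpos.
  have c0 : 0 <= c by rewrite /c divr_ge0 // ltW.
  have cm : c * m%:R = gamma k * lambda k by rewrite /c mulfVK // lt0r_neq0.
  have h1 : gamma k * lambda k <= gamma k * lambda1 by rewrite ler_pM2l ?gpos // lle.
  have h2 : c <= c * m%:R by rewrite ler_peMr.
  by rewrite c0 /=; split; lra.
have dbound : forall k i j, (2 <= k)%N -> (1 <= j <= I i)%N ->
  sqnorm (gamma k *: g k i j + (gamma k * lambda k / m%:R) *: Hsub k) <= gamma k ^+ 2 * E.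
  move=> k i j k2 hj.
  have [/andP [c0 c1] _] := cbound k k2.
  set c := gamma k * lambda k / m%:R in c0 c1 *.
  apply: le_trans (sqnormD_le _ _) _; rewrite !sqnormZ.
  have cc : c ^+ 2 <= (gamma k * lambda1) ^+ 2 by rewrite !expr2 ler_pM.
  have h1 : c ^+ 2 * sqnorm (Hsub k) <= (gamma k * lambda1) ^+ 2 * G2.
    by rewrite ler_pM ?exprn_ge0 ?sqnorm_ge0 ?subH.
  have h2 : gamma k ^+ 2 * sqnorm (g k i j) <= gamma k ^+ 2 * G2.
    apply: ler_wpM2l; last exact: subf.
    by rewrite exprn_ge0 // ltW // gpos // ltnW.
  rewrite /E; lra.
have sq0 : forall v : 'rV[R]_n, sqnorm (v - v) = 0.
  by move=> v; rewrite subrr /sqnorm /dotp big1 // => j _; rewrite mxE mul0r.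
have wid : forall (z u h v : 'rV[R]_n) (c1 c2 : R),
    z - c1 *: u - c2 *: h - v = (z - v) - (c1 *: u + c2 *: h).
  by move=> z u h v c1 c2; apply/rowP => l; rewrite !mxE; ring.
have dist : forall k i j, (2 <= k)%N -> (1 <= j <= (I i).+1)%N ->
    sqnorm (xloc k i j - x k) <= (2 ^+ j - 2) * E * gamma k ^+ 2.
  move=> k i; elim=> [//|j IH] k2 /andP [_ hj].
  case: j IH hj => [_ _|j IH hj].
    by rewrite xloc1 ?(ltnW k2) // sq0 expr1 subrr !mul0r.
  have hj' : (1 <= j.+1 <= I i)%N by rewrite ltnS in hj; rewrite hj.
  have [_ hp] := Hstep k i j.+1 (ltnW k2) hj'.
  have := proj_nonexp cvX hp (Xx k k2).
  rewrite wid => h; apply: le_trans h _; apply: le_trans (sqnormB_le _ _) _.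
  have IH2 : (1 <= j.+1 <= (I i).+1)%N by rewrite /= ltnW.
  have := IH k2 IH2.
  have := dbound k i j.+1 k2 hj'.
  rewrite (exprS _ j.+1); lra.
set Dist := 2 ^+ m.+1 * E.
have distD : forall k i j, (2 <= k)%N -> (1 <= j <= (I i).+1)%N ->
    sqnorm (xloc k i j - x k) <= Dist * gamma k ^+ 2.
  move=> k i j k2 hj; apply: le_trans (dist k i j k2 hj) _.
  have e0 : 0 <= E * gamma k ^+ 2.
    by rewrite mulr_ge0 // exprn_ge0 // ltW // gpos // ltnW.
  have : (2:R) ^+ j <= 2 ^+ m.+1.
    rewrite ler_eXn2l ?ltr1n //; case/andP: hj => _ hj; apply: leq_trans hj _.
    by rewrite ltnS Iim.
  move=> h; have h2 : (2:R) ^+ j - 2 <= 2 ^+ m.+1 by lra.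
  have := ler_wpM2r e0 h2; rewrite /Dist; lra.
set L2 := (2 * B) ^+ 2.
set Q := G2 + n%:R * (2 * M0) ^+ 2.
have Q0 : 0 <= Q by rewrite addr_ge0 // mulr_ge0 // exprn_ge0 // mulr_ge0.
set K3 := E + L2 + Dist.
set T := fun k : nat => gamma k ^+ 2 * K3 + gamma k * lambda k * Q.
have stepj : forall k i j, (2 <= k)%N -> (1 <= j <= I i)%N ->
    sqnorm (xloc k i j.+1 - y) <= sqnorm (xloc k i j - y)
      - 2 * gamma k * (f i j (x k) - f i j y) + T k.
  move=> k i j k2 hj.
  have k1 := ltnW k2.
  have hj' : (1 <= j <= (I i).+1)%N by case/andP: hj => -> /= /leqW.
  have [sg hp] := Hstep k i j k1 hj.
  have [/andP [c0 c1] c2] := cbound k k2.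
  have g0 := gpos k k1.
  have Xz := XlocA k i j k2 hj'.
  have i3 := distD k i j k2 hj'.
  have i5 := dbound k i j k2 hj.
  set z := xloc k i j in sg hp Xz i3 i5 *.
  set c := gamma k * lambda k / m%:R in hp c0 c1 c2 i5 *.
  have := proj_nonexp cvX hp Xy; rewrite wid (sqnormB (z - y)) dotpDr !dotpZr => h.
  have cz := XM _ Xz; have cxk := XM _ (Xx k k2); have cy := XM _ Xy.
  have i1 : f i j z - f i j y <= dotp (z - y) (g k i j).
    by have := sg y; rewrite dotpC -opprB dotpNl; lra.
  have i1' : gamma k * (f i j z - f i j y) <= gamma k * dotp (z - y) (g k i j).
    by rewrite ler_pM2l.
  have i2 := lip (cf i j hj) (goodf i j hj) cz cxk (ltW g0).
  rewrite sqnormC in i3.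
  have i4 : -(2 * dotp (z - y) (Hsub k)) <= Q.
    apply: le_trans (dotp_geN _ _) _; rewrite /Q addrC; apply: lerD; first exact: subH.
    apply: sqnorm_le_coord => l; rewrite !mxE; apply: le_trans (ler_normB _ _) _.
    by have := cz l; have := cy l; lra.
  have i4' : c * (-(2 * dotp (z - y) (Hsub k))) <= gamma k * lambda k * Q.
    apply: le_trans (ler_wpM2l c0 i4) _; exact: ler_wpM2r.
  rewrite /T /K3 /L2; lra.
have sumj : forall k i J, (2 <= k)%N -> (J <= I i)%N ->
    sqnorm (xloc k i J.+1 - y) <= sqnorm (x k - y)
      - 2 * gamma k * \sum_(1 <= j < J.+1) (f i j (x k) - f i j y) + J%:R * T k.
  move=> k i; elim=> [|J IH] k2 hJ.
    by rewrite big_geq // xloc1 ?(ltnW k2) // mulr0 mul0r subr0 addr0.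
  rewrite big_nat_recr //= mulrDr opprD addrA.
  have hJ' : (1 <= J.+1 <= I i)%N by rewrite hJ.
  have := stepj k i J.+1 k2 hJ'.
  have := IH k2 (ltnW hJ).
  rewrite -natr1; lra.
have FD : forall v, F v - F y = \sum_(i < S) \sum_(1 <= j < (I i).+1) (f i j v - f i j y).
  by move=> v; rewrite /F -sumrB; apply: eq_bigr => i _; rewrite -sumrB.
have SR : \sum_(i < S) (1:R) = S%:R by rewrite sumr_const card_ord.
have S0R : 0 < S%:R :> R by rewrite ltr0n.
have descent : forall k, (2 <= k)%N ->
    S%:R * sqnorm (x k.+1 - y) <=
    S%:R * sqnorm (x k - y) - 2 * gamma k * (F (x k) - F y) + m%:R * T k.
  move=> k k2.
  have e : x k.+1 - y =
      (\sum_(i < S) (1:R))^-1 *: \sum_(i < S) (1:R) *: (xloc k i (I i).+1 - y).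
    rewrite (Hx k (ltnW k2)) -avg_eq sumrB sumr_const card_ord scalerBr.
    by rewrite -(scaler_nat S y) scalerA mulVf ?scale1r // lt0r_neq0.
  have := jensen_fun (w := fun i => (1:R)) (fun i => xloc k i (I i).+1 - y)
     (@sqnorm_convex R n) (enum_ne S0) (fun _ _ => ltr01).
  rewrite -e SR => h; apply: le_trans h _.
  apply: le_trans (_ : \sum_(i < S) (sqnorm (x k - y)
      - 2 * gamma k * \sum_(1 <= j < (I i).+1) (f i j (x k) - f i j y) + (I i)%:R * T k) <= _).
    by apply: ler_sum => i _; rewrite mul1r; apply: sumj.
  rewrite !big_split /= sumrN sumr_const card_ord -mulr_sumr -FD.
  rewrite -mulr_suml -natr_sum -(mulr_natl (sqnorm _)); lra.
set P := fun k => sqnorm (x k - y).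
have tele : forall K, 2 * \sum_(2 <= k < K.+2) gamma k * (F (x k) - F y) + S%:R * P K.+2
     <= S%:R * P 2%N + m%:R * \sum_(2 <= k < K.+2) T k.
  elim=> [|K IH]; first by rewrite !big_geq //; lra.
  rewrite (big_nat_recr K.+2 2) // (big_nat_recr K.+2 2) //=.
  have := descent K.+2 isT; rewrite -/(P K.+3) -/(P K.+2); lra.
have Fconv : convex_fun F.
  move=> u v t t01; rewrite /F !mulr_sumr -big_split; apply: ler_sum => i _.
  rewrite !mulr_sumr -big_split; apply: ler_sum_nat => j hj; exact: cf.
set q := eps / 2.
have q0 : 0 < q by rewrite /q; lra.
have q1 : q < 1 by rewrite /q; lra.
set C3 := gamma1 ^+ 2 * K3 + gamma1 * lambda1 * Q.
have K30 : 0 <= K3.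
  have Dist0 : 0 <= Dist by rewrite mulr_ge0 // exprn_ge0.
  have L20 : 0 <= L2 by rewrite exprn_ge0 // mulr_ge0.
  by rewrite /K3 !addr_ge0.
have Tb : forall k, (1 <= k)%N -> T k <= C3 * (k%:R `^ (1 - q))^-1.
  move=> k k1.
  have ea : (k%:R `^ a) ^+ 2 = k%:R `^ (a + a).
    rewrite powRD ?expr2 //; apply/implyP => _; rewrite pnatr_eq0 -lt0n; exact: k1.
  have eb : k%:R `^ a * k%:R `^ b = k%:R `^ (1 - q).
    have -> : 1 - q = a + b by rewrite /q /a /b; field.
    rewrite powRD //; apply/implyP => _; rewrite pnatr_eq0 -lt0n; exact: k1.
  have le1 : ((k%:R `^ a) ^+ 2)^-1 <= (k%:R `^ (1 - q))^-1.
    rewrite lef_pV2 ?posrE ?exprn_gt0 ?powpos // ea; apply: ler_powR; first by rewrite ler1n.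
    rewrite /q /a; lra.
  have eT : T k = gamma1 ^+ 2 * K3 * ((k%:R `^ a) ^+ 2)^-1
      + gamma1 * lambda1 * Q * (k%:R `^ (1 - q))^-1.
    rewrite /T /gamma /lambda -eb; field.
    by rewrite !gt_eqF ?powpos.
  rewrite eT /C3 mulrDl; apply: lerD => //.
  by apply: (ler_wpM2l _ le1); rewrite mulr_ge0 // exprn_ge0 // ltW.
set C0 := `|gamma 1%N * (F (x 1%N) - F y)| + S%:R * P 2%N / 2 + m%:R * C3 / (2 * q).
exists (C0 / gamma1).
case=> [//|K'] _.
have P20 : 0 <= P 2%N by apply: sqnorm_ge0.
have C30 : 0 <= C3.
  by rewrite /C3 addr_ge0 // mulr_ge0 // ?exprn_ge0 ?mulr_ge0 // ltW.
set K := K'.+1.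
set SK := \sum_(1 <= k < K.+1) gamma k.
have rne : index_iota 1 K.+1 != [::] by [].
have rpos : forall k, k \in index_iota 1 K.+1 -> 0 < gamma k.
  by move=> k; rewrite mem_index_iota => /andP [h _]; exact: gpos.
have SK0 : 0 < SK := sum_pos rne rpos.
have J : SK * F (xhat K) <= \sum_(1 <= k < K.+1) gamma k * F (x k)
  := jensen_fun x Fconv rne rpos.
have eqs : \sum_(1 <= k < K.+1) gamma k * F (x k) - SK * F y
    = gamma 1%N * (F (x 1%N) - F y) + \sum_(2 <= k < K.+1) gamma k * (F (x k) - F y).
  rewrite -big_ltn // /SK mulr_suml -sumrB; apply: eq_bigr => k _; by rewrite mulrBr.
have T1 : 0 <= T 1%N.
  rewrite /T addr_ge0 // mulr_ge0 // ?exprn_ge0 ?mulr_ge0 // ltW ?gpos ?lpos //.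
have sumT : \sum_(2 <= k < K.+1) T k <= C3 * (K%:R `^ q / q).
  apply: le_trans (_ : \sum_(1 <= k < K.+1) T k <= _).
    by rewrite [X in _ <= X](big_ltn (m := 1) (n := K.+1)) // lerDr.
  apply: le_trans (_ : \sum_(1 <= k < K.+1) C3 * (1 / k%:R `^ (1 - q)) <= _).
    by apply: ler_sum_nat => k /andP [k1 _]; rewrite div1r; apply: Tb.
  by rewrite -mulr_sumr ler_wpM2l // sum_pow.
have tK := tele K'.
set Kq := K%:R `^ q.
set Kr := K%:R `^ (1 / 2 - eps).
have K0 : 0 < K%:R :> R by rewrite ltr0n.
have Kq1 : 1 <= Kq.
  have : K%:R `^ 0 <= Kq :> R by apply: ler_powR; [rewrite ler1n | exact: ltW].
  by rewrite powRr0.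
have Kr0 : 0 < Kr by apply: powR_gt0.
have a0 : 0 <= a by rewrite /a; lra.
have SKlow : gamma1 * (Kq * Kr) <= SK.
  apply: le_trans (_ : \sum_(1 <= k < K.+1) gamma K <= _); last first.
    apply: ler_sum_nat => k /andP [k1 kK]; rewrite /gamma; apply: ler_wpM2l; first exact: ltW.
    rewrite lef_pV2 ?posrE ?powpos //; apply: ge0_ler_powR => //.
    - by rewrite nnegrE ler0n.
    - by rewrite nnegrE ler0n.
    - by rewrite ler_nat -ltnS.
  rewrite sumr_const_nat subSS subn0 -mulr_natl /gamma.
  have e1 : K%:R / K%:R `^ a = K%:R `^ (1 - a).
    rewrite powRB ?powRr1 ?ler0n //; apply/implyP => _; exact: lt0r_neq0.
  have e2 : K%:R `^ (1 - a) = Kq * Kr.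
    rewrite /Kq /Kr -powRD; last by apply/implyP => _; exact: lt0r_neq0.
    by congr (_ `^ _); rewrite /a /q; field.
  by rewrite [X in _ <= X]mulrCA e1 e2.
set D := F (xhat K) - F y.
have hD : SK * D <= C0 * Kq.
  have h1 : SK * D <= gamma 1%N * (F (x 1%N) - F y)
      + \sum_(2 <= k < K.+1) gamma k * (F (x k) - F y) by rewrite -eqs /D mulrBr; lra.
  have h2 : 2 * \sum_(2 <= k < K.+1) gamma k * (F (x k) - F y)
      <= S%:R * P 2%N + m%:R * (C3 * (Kq / q)).
    have : m%:R * \sum_(2 <= k < K.+1) T k <= m%:R * (C3 * (Kq / q)) by rewrite ler_wpM2l.
    have : 0 <= S%:R * P K.+1 by rewrite mulr_ge0 // sqnorm_ge0.
    move: tK; rewrite -/K; lra.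
  have h3 : `|gamma 1%N * (F (x 1%N) - F y)| <= `|gamma 1%N * (F (x 1%N) - F y)| * Kq.
    by rewrite ler_peMr.
  have h4 : S%:R * P 2%N / 2 <= S%:R * P 2%N / 2 * Kq.
    by rewrite ler_peMr // divr_ge0 // mulr_ge0.
  have h5 : m%:R * (C3 * (Kq / q)) / 2 = m%:R * C3 / (2 * q) * Kq.
    by field; rewrite gt_eqF.
  have := ler_norm (gamma 1%N * (F (x 1%N) - F y)).
  rewrite /C0; lra.
have C00 : 0 <= C0.
  by rewrite /C0 !addr_ge0 // ?divr_ge0 ?mulr_ge0 // ltW.
rewrite ler_pdivlMr // ler_pdivlMr //.
have [Dle|Dgt] := lerP D 0.
  apply: (le_trans _ C00); rewrite -mulrA; apply: mulr_le0_ge0 => //.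
  by rewrite mulr_ge0 // ltW.
have h6 : D * (gamma1 * (Kq * Kr)) <= D * SK by rewrite ler_wpM2l // ltW.
have h7 : D * Kr * gamma1 * Kq <= C0 * Kq.
  have -> : D * Kr * gamma1 * Kq = D * (gamma1 * (Kq * Kr)) by ring.
  by apply: le_trans h6 _; rewrite mulrC.
by move: h7; rewrite ler_pM2r // (lt_le_trans ltr01 Kq1).
Qed.
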